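(* Let $R$ be a formal resonant vector field and $\Phi$ a resonant analytic diffeomorphism which is tangent to identity. Then $D\Phi\cdot R$ is a formal resonant vector field.
   Context: Fix $\omega\in\mathbb{R}^d$ and $\lambda_1,\dots,\lambda_n\in\mathbb{C}$; $X$ are periodic variables (Fourier expansions in $e^{i\langle P,X\rangle}$, $P\in\mathbb{Z}^d$), $Y\in\mathbb{C}^n$, $|Q|=\sum Q_j$, $\langle Q,\Lambda\rangle=\sum Q_j\lambda_j$. A formal Fourier–Taylor series is $f=\sum f_{P,Q}e^{i\langle P,X\rangle}Y^Q$ with $\sum_P|f_{P,Q}|^2<\infty$ for each $Q$; it has order $k$ if $f_{P,Q}=0$ for $|Q|\le k-1$, and is resonant if $f_{P,Q}\ne0\Rightarrow i\langle P,\omega\rangle+\langle Q,\Lambda\rangle=0$. A formal vector field is a $(d+n)$-tuple $(R_1,\dots,R_{d+n})$ of formal series; it is resonant if $R_1,\dots,R_d$ are resonant and, for each $j'$, $R_{d+j',P,Q}\ne0\Rightarrow i\langle P,\omega\rangle+\langle Q,\Lambda\rangle-\lambda_{j'}=0$. A map $\Phi$ is tangent to identity if $\Phi_L-X_L$ has order $1$ for $L\le d$ and $\Phi_{d+j'}-Y_{j'}$ has order $2$. Writing $\Phi_j=X_j+\tilde\Phi_j$ ($j\le d$) and $\Phi_{d+j'}=Y_{j'}\tilde\Phi_{d+j'}$, $\Phi$ is resonant if all $\tilde\Phi_1,\dots,\tilde\Phi_{d+n}$ are resonant series. $D\Phi\cdot R$ denotes the Jacobian matrix of $\Phi$ (in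 the variables $X_1,\dots,X_d,Y_1,\dots,Y_n$) applied to $R$. *)

(* Defs.v *)
From HB Require Import structures.
From mathcomp Require Import all_boot all_order all_algebra.
From mathcomp Require Import all_classical all_reals all_analysis.
From mathcomp Require Import complex.
Set Implicit Arguments. Unset Strict Implicit. Unset Printing Implicit Defensive.
Import Order.TTheory GRing.Theory Num.Theory.
Import numFieldNormedType.Exports.
Local Open Scope ring_scope.

(* Fourier index P in Z^d and Taylor multi-index Q in N^n. *)
Definition Pidx (d : nat) := {ffun 'I_d -> int}.
Definition Qidx (n : nat) := {ffun 'I_n -> nat}.

(* A (candidate) Fourier--Taylor series: its coefficient family f_{P,Q}. *)
Definition ftseries (R : realType) (d n : nat) := Pidx d -> Qidx n -> R[i].

Definition cabs (R : realType) (z : R[i]) : R := ComplexField.Normc.normc z.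

Definition qsize (n : nat) (Q : Qidx n) : nat := (\sum_(j < n) Q j)%N.
Definition psize (d : nat) (P : Pidx d) : nat := (\sum_(j < d) `|P j|)%N.

Definition is_fts (R : realType) (d n : nat) (f : ftseries R d n) : Prop :=
  forall Q : Qidx n,
    (\esum_(P in [set: Pidx d]) ((cabs (f P Q)) ^+ 2)%:E < +oo)%E.

Definition has_order (R : realType) (d n : nat) (k : nat) (f : ftseries R d n) : Prop :=
  forall P Q, (qsize Q < k)%N -> f P Q = 0.

Definition dotw (R : realType) (d : nat) (omega : 'I_d -> R) (P : Pidx d) : R :=
  \sum_(j < d) (P j)%:~R * omega j.
Definition dotL (R : realType) (n : nat) (lam : 'I_n -> R[i]) (Q : Qidx n) : R[i] :=
  \sum_(j < n) (Q j)%:R * lam j.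

Definition small_div (R : realType) (d n : nat) (omega : 'I_d -> R) (lam : 'I_n -> R[i])
  (P : Pidx d) (Q : Qidx n) : R[i] :=
  'i%C * (dotw omega P)%:C%C + dotL lam Q.

Definition resonant (R : realType) (d n : nat) (omega : 'I_d -> R) (lam : 'I_n -> R[i])
  (f : ftseries R d n) : Prop :=
  forall P Q, f P Q != 0 -> small_div omega lam P Q = 0.

(* A formal vector field (R_1,...,R_{d+n}) is given by its first d components RX
   and its last n components RY. *)
Definition formal_vf (R : realType) (d n : nat)
  (RX : 'I_d -> ftseries R d n) (RY : 'I_n -> ftseries R d n) : Prop :=
  (forall L, is_fts (RX L)) /\ (forall j, is_fts (RY j)).

Definition resonant_vf (R : realType) (d n : nat) (omega : 'I_d -> R) (lam : 'I_n -> R[i])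
  (RX : 'I_d -> ftseries R d n) (RY : 'I_n -> ftseries R d n) : Prop :=
  (forall L, resonant omega lam (RX L)) /\
  (forall j P Q, RY j P Q != 0 -> small_div omega lam P Q - lam j = 0).

Definition qunit (n : nat) (j : 'I_n) : Qidx n := [ffun k => nat_of_bool (k == j)].

Definition monoY (R : realType) (d n : nat) (j : 'I_n) : ftseries R d n :=
  fun P Q => if (P == [ffun => 0]) && (Q == qunit j) then 1 else 0.

Definition mulY (R : realType) (d n : nat) (j : 'I_n) (g : ftseries R d n) : ftseries R d n :=
  fun P Q => if (0 < Q j)%N then g P [ffun k => (Q k - nat_of_bool (k == j))%N] else 0.

Definition sub_series (R : realType) (d n : nat) (f g : ftseries R d n) : ftseries R d n :=
  fun P Q => f P Q - g P Q.

(* The map Phi is described by phiX L = tilde Phi_L = Phi_L - X_L  (L <= d)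
   and PhiY j = Phi_{d+j}. *)

Definition tangent_id (R : realType) (d n : nat)
  (phiX : 'I_d -> ftseries R d n) (PhiY : 'I_n -> ftseries R d n) : Prop :=
  (forall L, has_order 1 (phiX L)) /\
  (forall j, has_order 2 (sub_series (PhiY j) (@monoY R d n j))).

Definition resonant_map (R : realType) (d n : nat) (omega : 'I_d -> R) (lam : 'I_n -> R[i])
  (phiX : 'I_d -> ftseries R d n) (PhiY : 'I_n -> ftseries R d n) : Prop :=
  (forall L, resonant omega lam (phiX L)) /\
  (forall j, exists g : ftseries R d n,
      [/\ is_fts g, PhiY j = mulY j g & resonant omega lam g]).

Definition analytic (R : realType) (d n : nat) (f : ftseries R d n) : Prop :=
  exists (C r rho : R), [/\ 0 < r, 0 < rho &
    forall P Q, cabs (f P Q) <= C * expR (- (r * (psize P)%:R)) * rho ^- (qsize Q)].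

Definition analytic_map (R : realType) (d n : nat)
  (phiX : 'I_d -> ftseries R d n) (PhiY : 'I_n -> ftseries R d n) : Prop :=
  (forall L, analytic (phiX L)) /\ (forall j, analytic (PhiY j)).

Definition dX (R : realType) (d n : nat) (L : 'I_d) (f : ftseries R d n) : ftseries R d n :=
  fun P Q => 'i%C * (P L)%:~R * f P Q.
Definition dY (R : realType) (d n : nat) (k : 'I_n) (f : ftseries R d n) : ftseries R d n :=
  fun P Q => (Q k).+1%:R * f P [ffun j => (Q j + nat_of_bool (j == k))%N].

(* Cauchy product, partial sums over the cube |P1|_oo <= N:
   sum_{|P1|_oo <= N} sum_{Q1 + Q2 = Q} f_{P1,Q1} g_{P-P1,Q2} *)
Definition cube_pt (d N : nat) (c : {ffun 'I_d -> 'I_(2 * N).+1}) : Pidx d :=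
  [ffun j => (c j)%:Z - N%:Z].

Definition prod_partial (R : realType) (d n : nat) (f g : ftseries R d n)
  (P : Pidx d) (Q : Qidx n) (N : nat) : R[i] :=
  \sum_(c : {ffun 'I_d -> 'I_(2 * N).+1})
   \sum_(Q1 : {ffun 'I_n -> 'I_(qsize Q).+1} | [forall j, (Q1 j <= Q j)%N])
     f (cube_pt c) [ffun j => nat_of_ord (Q1 j)] *
     g [ffun j => P j - cube_pt c j] [ffun j => (Q j - Q1 j)%N].

Definition prod_defined (R : realType) (d n : nat) (f g : ftseries R d n) : Prop :=
  forall P Q, cvgn (fun N => (prod_partial f g P Q N : R[i]^o)).

Definition mul_series (R : realType) (d n : nat) (f g : ftseries R d n) : ftseries R d n :=
  fun P Q => limn (fun N => (prod_partial f g P Q N : R[i]^o)).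

(* D Phi . R, with Phi_L = X_L + phiX L, Phi_{d+j} = PhiY j *)
Definition DPhiR_X (R : realType) (d n : nat)
  (phiX : 'I_d -> ftseries R d n) (RX : 'I_d -> ftseries R d n) (RY : 'I_n -> ftseries R d n)
  (L : 'I_d) : ftseries R d n :=
  fun P Q => RX L P Q
    + \sum_(j < d) mul_series (dX j (phiX L)) (RX j) P Q
    + \sum_(k < n) mul_series (dY k (phiX L)) (RY k) P Q.

Definition DPhiR_Y (R : realType) (d n : nat)
  (PhiY : 'I_n -> ftseries R d n) (RX : 'I_d -> ftseries R d n) (RY : 'I_n -> ftseries R d n)
  (m : 'I_n) : ftseries R d n :=
  fun P Q => \sum_(j < d) mul_series (dX j (PhiY m)) (RX j) P Q
    + \sum_(k < n) mul_series (dY k (PhiY m)) (RY k) P Q.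

Definition DPhiR_defined (R : realType) (d n : nat)
  (phiX : 'I_d -> ftseries R d n) (PhiY : 'I_n -> ftseries R d n)
  (RX : 'I_d -> ftseries R d n) (RY : 'I_n -> ftseries R d n) : Prop :=
  (forall L j, prod_defined (dX j (phiX L)) (RX j)) /\
  (forall L k, prod_defined (dY k (phiX L)) (RY k)) /\
  (forall m j, prod_defined (dX j (PhiY m)) (RX j)) /\
  (forall m k, prod_defined (dY k (PhiY m)) (RY k)).

(* Main.v *)
Require Import Defs.
From HB Require Import structures.
From mathcomp Require Import all_boot all_order all_algebra.
From mathcomp Require Import all_classical all_reals all_analysis.
From mathcomp Require Import complex.
Set Implicit Arguments. Unset Strict Implicit. Unset Printing Implicit Defensive.
Import Order.TTheory GRing.Theory Num.Theory.
From mathcomp Require Import lra.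
Import numFieldNormedType.Exports.
Local Open Scope ring_scope.
Notation cRe := (@complex.Re _). Notation cIm := (@complex.Im _).
Lemma cabs_ge0 (R : realType) (z : R[i]) : 0 <= cabs z.
Proof. by case: z => a b; rewrite /cabs /= sqrtr_ge0. Qed.

Lemma cabs2 (R : realType) (z : R[i]) : cabs z ^+ 2 = cRe z ^+ 2 + cIm z ^+ 2.
Proof. by case: z => a b; rewrite /cabs /= sqr_sqrtr // addr_ge0 ?sqr_ge0. Qed.

Lemma cabsM (R : realType) (x y : R[i]) : cabs (x * y) = cabs x * cabs y.
Proof. exact: ComplexField.Normc.normcM. Qed.

Lemma cabsD (R : realType) (x y : R[i]) : cabs (x + y) <= cabs x + cabs y.
Proof. exact: (@le_normcD R x y). Qed.

Lemma cabs0 (R : realType) : cabs (0 : R[i]) = 0.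
Proof. exact: ComplexField.Normc.normc0. Qed.

Lemma cabs_sum (R : realType) (I : Type) (r : seq I) (P : pred I) (F : I -> R[i]) :
  cabs (\sum_(i <- r | P i) F i) <= \sum_(i <- r | P i) cabs (F i).
Proof.
elim: r => [|x r IH]; first by rewrite !big_nil cabs0.
rewrite !big_cons; case: (P x) => //.
by apply: le_trans (cabsD _ _) _; rewrite lerD2l.
Qed.

Lemma Re_le (R : realType) (z : R[i]) : `|cRe z| <= cabs z.
Proof.
rewrite -ler_sqr ?nnegrE ?cabs_ge0 ?normr_ge0 // real_normK ?num_real //.
by rewrite cabs2 lerDl sqr_ge0.
Qed.

Lemma Im_le (R : realType) (z : R[i]) : `|cIm z| <= cabs z.
Proof.
rewrite -ler_sqr ?nnegrE ?cabs_ge0 ?normr_ge0 // real_normK ?num_real //.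
by rewrite cabs2 lerDr sqr_ge0.
Qed.

Lemma Re_sum (R : realType) (I : Type) (r : seq I) (P : pred I) (F : I -> R[i]) :
  cRe (\sum_(i <- r | P i) F i) = \sum_(i <- r | P i) cRe (F i).
Proof.
elim: r => [|x r IH]; first by rewrite !big_nil.
rewrite !big_cons; case: (P x) => //; rewrite -IH.
by move: (F x) (\sum_(i <- r | P i) F i) => [a b] [c e].
Qed.

Lemma Im_sum (R : realType) (I : Type) (r : seq I) (P : pred I) (F : I -> R[i]) :
  cIm (\sum_(i <- r | P i) F i) = \sum_(i <- r | P i) cIm (F i).
Proof.
elim: r => [|x r IH]; first by rewrite !big_nil.
rewrite !big_cons; case: (P x) => //; rewrite -IH.
by move: (F x) (\sum_(i <- r | P i) F i) => [a b] [c e].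
Qed.

Lemma cabs_le_sum (R : realType) (z : R[i]) : cabs z <= `|cRe z| + `|cIm z|.
Proof.
rewrite -ler_sqr ?nnegrE ?cabs_ge0 ?addr_ge0 // cabs2.
have ha := normr_ge0 (cRe z); have hb := normr_ge0 (cIm z).
have -> : cRe z ^+ 2 = `|cRe z| ^+ 2 by rewrite real_normK ?num_real.
have -> : cIm z ^+ 2 = `|cIm z| ^+ 2 by rewrite real_normK ?num_real.
nra.
Qed.

Lemma cabs_le1 (R : realType) (z : R[i]) : cabs z <= 1 + cabs z ^+ 2.
Proof. have := cabs_ge0 z; set x := cabs z => x0; nra. Qed.

Lemma cs_ineq (R : realType) (I : Type) (r : seq I) (u v : I -> R) :
  (forall i, 0 <= u i) ->
  (\sum_(i <- r) u i * v i) ^+ 2 <= (\sum_(i <- r) u i) * \sum_(i <- r) u i * v i ^+ 2.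
Proof.
move=> u0.
have E1 : (\sum_(i <- r) u i * v i) ^+ 2 =
   \sum_(i <- r) \sum_(j <- r) (u i * u j) * (v i * v j).
  rewrite expr2 mulr_suml; apply: eq_bigr => i _; rewrite mulr_sumr.
  by apply: eq_bigr => j _; rewrite mulrACA.
have E2 : (\sum_(i <- r) u i) * \sum_(i <- r) u i * v i ^+ 2 =
   \sum_(i <- r) \sum_(j <- r) (u i * u j) * v j ^+ 2.
  rewrite mulr_suml; apply: eq_bigr => i _; rewrite mulr_sumr.
  by apply: eq_bigr => j _; rewrite mulrA.
have E3 : (\sum_(i <- r) u i) * \sum_(i <- r) u i * v i ^+ 2 =
   \sum_(i <- r) \sum_(j <- r) (u i * u j) * v i ^+ 2.
  rewrite E2 exchange_big; apply: eq_bigr => i _; apply: eq_bigr => j _.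
  by rewrite [u j * _]mulrC.
set L := (\sum_(i <- r) u i * v i) ^+ 2.
set Rt := (\sum_(i <- r) u i) * _.
suff : 2 * L <= Rt + Rt by lra.
rewrite /Rt {1}E2 E3 /L E1 mulr_sumr -big_split /=; apply: ler_sum => i _.
rewrite mulr_sumr -big_split /=; apply: ler_sum => j _.
have := mulr_ge0 (u0 i) (u0 j); set w := u i * u j => w0.
have : 0 <= w * (v i - v j) ^+ 2 by rewrite mulr_ge0 ?sqr_ge0.
rewrite sqrrB; nra.
Qed.

Lemma sum_sub_le (R : realType) (T : eqType) (s1 s2 : seq T) (w : T -> R) :
  (forall x, 0 <= w x) -> uniq s1 -> uniq s2 -> {subset s1 <= s2} ->
  \sum_(x <- s1) w x <= \sum_(x <- s2) w x.
Proof.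
move=> w0 u1 u2 sub.
rewrite [X in _ <= X](bigID (mem s1)) /= -[X in X <= _]addr0; apply: lerD; last by rewrite sumr_ge0.
rewrite -[X in _ <= X]big_filter le_eqVlt; apply/orP; left; apply/eqP; apply: perm_big.
apply: uniq_perm => //; first exact: filter_uniq.
by move=> x; rewrite mem_filter; apply/idP/andP => [xs|[]//]; split => //; exact: sub.
Qed.

Local Open Scope classical_set_scope.
Definition l2 (R : realType) (d : nat) (g : Pidx d -> R[i]) : Prop :=
  exists B : R, forall s : seq (Pidx d), uniq s -> \sum_(p <- s) cabs (g p) ^+ 2 <= B.

Lemma fts_l2 (R : realType) (d n : nat) (f : ftseries R d n) :
  is_fts f -> forall Q, l2 (fun P => f P Q).
Proof.
move=> h Q; have := h Q.
set E := esum _ _ => Eoo.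
have E0 : (0 <= E)%E by apply: esum_ge0 => x _; rewrite lee_fin sqr_ge0.
exists (fine E) => s us.
rewrite -lee_fin fineK; last by rewrite ge0_fin_numE.
rewrite -sumEFin fsbig_seq //; apply: esum_ge.
exists [set` s] => //; split; [exact: finite_seq | by []].
Qed.

Lemma l2_fts (R : realType) (d n : nat) (f : ftseries R d n) :
  (forall Q, l2 (fun P => f P Q)) -> is_fts f.
Proof.
move=> h Q; have [B hB] := h Q.
apply: (@le_lt_trans _ _ B%:E); last exact: ltry.
apply: ge_ereal_sup => _ [X [finX _] <-].
have [s ->] := (finite_seqP X).1 finX.
have -> : [set` s] = [set` undup s].
  by apply/seteqP; split => x /=; rewrite mem_undup.
rewrite -fsbig_seq ?undup_uniq // sumEFin lee_fin; exact/hB/undup_uniq.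
Qed.

Lemma l2_add (R : realType) (d : nat) (f g : Pidx d -> R[i]) :
  l2 f -> l2 g -> l2 (fun P => f P + g P).
Proof.
move=> [A hA] [B hB]; exists (2 * A + 2 * B) => s us.
apply: (@le_trans _ _ (\sum_(p <- s) (2 * cabs (f p) ^+ 2 + 2 * cabs (g p) ^+ 2))).
  apply: ler_sum => p _.
  have h1 := cabsD (f p) (g p); have h0 := cabs_ge0 (f p + g p).
  have h2 := cabs_ge0 (f p); have h3 := cabs_ge0 (g p).
  set x := cabs (f p + g p) in h0 h1 *; set a := cabs (f p) in h1 h2 *;
  set b := cabs (g p) in h1 h3 *.
  have : x ^+ 2 <= (a + b) ^+ 2 by rewrite ler_sqr ?nnegrE ?addr_ge0.
  have := sqr_ge0 (a - b); nra.
rewrite big_split /= -!mulr_sumr; apply: lerD; rewrite ler_pM2l ?ltr0n //; auto.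
Qed.

Lemma l2_0 (R : realType) (d : nat) : l2 (fun _ : Pidx d => (0 : R[i])).
Proof. by exists 0 => s _; rewrite big1 // => p _; rewrite cabs0 expr0n. Qed.

Lemma l2_sum (R : realType) (d : nat) (I : Type) (r : seq I) (pr : pred I)
   (F : I -> Pidx d -> R[i]) :
  (forall i, pr i -> l2 (F i)) -> l2 (fun P => \sum_(i <- r | pr i) F i P).
Proof.
move=> h; elim: r => [|x r IH].
  by under eq_fun do rewrite big_nil; exact: l2_0.
under eq_fun do rewrite big_cons.
case hx: (pr x) => //; exact: l2_add (h _ hx) IH.
Qed.

Lemma l2_bound (R : realType) (d : nat) (g : Pidx d -> R[i]) :
  l2 g -> exists G, 0 <= G /\ forall p, cabs (g p) <= G.
Proof.
move=> [B hB]; exists (1 + Num.max B 0); split; first by rewrite addr_ge0 // le_max lexx orbT.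
move=> p; apply: le_trans (cabs_le1 _) _; rewrite lerD2l.
have := hB [:: p] isT; rewrite big_seq1 => h.
by rewrite le_max h.
Qed.

From mathcomp Require Import zify.

Definition cubeseq (d N : nat) : seq (Pidx d) :=
  map (@cube_pt d N) (index_enum {ffun 'I_d -> 'I_(2 * N).+1}).

Definition psub (d : nat) (P p : Pidx d) : Pidx d := [ffun j => P j - p j].

Lemma cube_sum (V : nmodType) (d N : nat) (F : Pidx d -> V) :
  \sum_(c : {ffun 'I_d -> 'I_(2 * N).+1}) F (cube_pt c) = \sum_(p <- cubeseq d N) F p.
Proof. by rewrite big_map. Qed.

Lemma cube_pt_inj (d N : nat) : injective (@cube_pt d N).
Proof.
move=> c1 c2 /ffunP h; apply/ffunP => j; apply: val_inj => /=.
by have := h j; rewrite !ffunE => /eqP; rewrite (inj_eq (addIr _)) => /eqP [].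
Qed.

Lemma cubeseq_uniq (d N : nat) : uniq (cubeseq d N).
Proof. by rewrite map_inj_uniq ?index_enum_uniq //; exact: cube_pt_inj. Qed.

Lemma mem_cubeseq (d N : nat) (p : Pidx d) :
  (p \in cubeseq d N) = [forall j, `|p j| <= N]%N.
Proof.
apply/idP/forallP => [/mapP [c _ ->] j|h].
  rewrite ffunE; have := ltn_ord (c j); move: (nat_of_ord (c j)) => k; lia.
apply/mapP; exists [ffun j => inord `|(p j + N%:Z)%R|%N : 'I_(2 * N).+1].
  by rewrite mem_index_enum.
apply/ffunP => j; rewrite !ffunE inordK; have := h j; move: (p j) => z.
    by lia. by lia.
Qed.

Lemma cubeseq_sub (d N M : nat) : (N <= M)%N -> {subset cubeseq d N <= cubeseq d M}.
Proof.
move=> NM p; rewrite !mem_cubeseq => /forallP h; apply/forallP => j.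
exact: leq_trans (h j) NM.
Qed.

Lemma psub_inj (d : nat) (p : Pidx d) : injective (fun P => psub P p).
Proof.
move=> P1 P2 /ffunP h; apply/ffunP => j; have := h j; rewrite !ffunE.
by move/eqP; rewrite (inj_eq (addIr _)) => /eqP.
Qed.

Lemma geom_bound (R : realType) (q : R) (n : nat) :
  0 <= q < 1 -> \sum_(i < n) q ^+ i <= (1 - q)^-1.
Proof.
move=> /andP [q0 q1].
have nz : 1 - q != 0 by rewrite subr_eq0 (gt_eqF q1).
have hS : (1 - q) * \sum_(i < n) q ^+ i = 1 - q ^+ n.
  by rewrite -opprB mulNr -subrX1 opprB.
rewrite -[X in X <= _](mulKf nz) hS -[X in _ <= X]mulr1 ler_wpM2l //.
  by rewrite invr_ge0 subr_ge0 ltW.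
by rewrite lerBlDr lerDl exprn_ge0.
Qed.

Lemma line_bound (R : realType) (q : R) (N : nat) :
  0 <= q < 1 ->
  \sum_(i < (2 * N).+1) q ^+ `|(i%:Z - N%:Z)%R|%N <= 2 * (1 - q)^-1.
Proof.
move=> hq; have /andP [q0 q1] := hq.
have -> : \sum_(i < (2 * N).+1) q ^+ `|(i%:Z - N%:Z)%R|%N =
   \sum_(0 <= i < (2 * N).+1) q ^+ `|(i%:Z - N%:Z)%R|%N by rewrite big_mkord.
rewrite (big_cat_nat _ (n := N)) //=; last by rewrite ltnW // ltnS leq_pmull.
rewrite mulr2n mulrDl mul1r; apply: lerD.
  rewrite big_nat_rev /= add0n.
  apply: (@le_trans _ _ (\sum_(0 <= i < N.+1) q ^+ i)).
    rewrite big_nat_recl // -[X in X <= _]add0r lerD ?exprn_ge0 //.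
    rewrite big_nat_cond [X in _ <= X]big_nat_cond le_eqVlt; apply/orP; left.
    apply/eqP/eq_bigr => i /andP [/andP [_ hi] _]; congr (_ ^+ _); lia.
  by rewrite big_mkord geom_bound.
rewrite -{1}[N]add0n big_addn.
apply: le_trans (geom_bound N.+1 hq).
have -> : \sum_(i < N.+1) q ^+ i = \sum_(0 <= i < N.+1) q ^+ i by rewrite big_mkord.
rewrite le_eqVlt; apply/orP; left.
have -> : ((2 * N).+1 - N = N.+1)%N by lia.
apply/eqP/eq_bigr => i _; congr (_ ^+ _); lia.
Qed.

Lemma cube_exp_bound (R : realType) (d : nat) (q : R) :
  0 <= q < 1 -> exists K, forall N, \sum_(p <- cubeseq d N) q ^+ psize p <= K.
Proof.
move=> hq; have /andP [q0 q1] := hq.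
exists ((2 * (1 - q)^-1) ^+ d) => N.
rewrite -cube_sum.
have -> : \sum_(c : {ffun 'I_d -> 'I_(2 * N).+1}) q ^+ psize (cube_pt c) =
   \prod_(j < d) \sum_(i < (2 * N).+1) q ^+ `|(i%:Z - N%:Z)%R|%N.
  rewrite bigA_distr_bigA /=; apply: eq_bigr => c _.
  by rewrite /psize expr_sum; apply: eq_bigr => j _; rewrite ffunE.
have -> : (2 * (1 - q)^-1) ^+ d = \prod_(j < d) (2 * (1 - q)^-1) by rewrite prodr_const card_ord.
apply: ler_prod => j _.
by rewrite sumr_ge0 ?line_bound // => i _; rewrite exprn_ge0.
Qed.

Local Open Scope classical_set_scope.

Definition cs (R : realType) (d : nat) (w : Pidx d -> R) (N : nat) : R :=
  \sum_(p <- cubeseq d N) w p.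

Lemma cs_cvg_nonneg (R : realType) (d : nat) (w : Pidx d -> R) :
  (forall p, 0 <= w p) -> (exists K, forall N, cs w N <= K) -> cvgn (cs w).
Proof.
move=> w0 [K hK]; apply: nondecreasing_is_cvgn.
  move=> N M NM; apply: sum_sub_le => //; rewrite ?cubeseq_uniq //.
  exact: cubeseq_sub.
by exists K => _ [N _ <-].
Qed.

Lemma cs_cvg (R : realType) (d : nat) (w v : Pidx d -> R) :
  (forall p, `|w p| <= v p) -> (exists K, forall N, cs v N <= K) -> cvgn (cs w).
Proof.
move=> wv [K hK].
pose wp := fun p => (w p + `|w p|) / 2.
pose wm := fun p => (`|w p| - w p) / 2.
have F p : [/\ w p <= `|w p|, - w p <= `|w p| & `|w p| <= v p].
  by split; rewrite ?ler_norm ?ler_normr ?lexx ?orbT.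
have ewp : forall p, w p = wp p - wm p.
  by move=> p; rewrite /wp /wm; lra.
have bp : forall p, 0 <= wp p <= v p.
  by move=> p; have [h1 h2 h3] := F p; rewrite /wp; apply/andP; split; lra.
have bm : forall p, 0 <= wm p <= v p.
  by move=> p; have [h1 h2 h3] := F p; rewrite /wm; apply/andP; split; lra.
have cp : cvgn (cs wp).
  apply: cs_cvg_nonneg; first by move=> p; have /andP[] := bp p.
  exists K => N; apply: le_trans (hK N); apply: ler_sum => p _.
  by have /andP[] := bp p.
have cm : cvgn (cs wm).
  apply: cs_cvg_nonneg; first by move=> p; have /andP[] := bm p.
  exists K => N; apply: le_trans (hK N); apply: ler_sum => p _.
  by have /andP[] := bm p.
have -> : cs w = (fun N => cs wp N - cs wm N).
  apply: funext => N; rewrite /cs /= -sumrB; apply: eq_bigr => p _; exact: ewp.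
exact: is_cvgB.
Qed.

Lemma cnorm (R : realType) (z : R[i]) : `|z| = (cabs z)%:C%C.
Proof. by case: z => x y; rewrite normc_def. Qed.

Lemma cvg_complex (R : realType) (u : nat -> R[i]) (a b : R) :
  (fun N => cRe (u N)) @ \oo --> a -> (fun N => cIm (u N)) @ \oo --> b ->
  ((u : nat -> R[i]^o) @ \oo --> ((a +i* b)%C : R[i]^o)).
Proof.
move=> ha hb; apply/cvgrPdist_lt => e e0.
have : (0 : R[i]) < e by [].
rewrite ltcE /= => /andP [/eqP eIm eRe].
have h2 : 0 < cRe e / 2 by rewrite divr_gt0.
have /cvgrPdist_lt/(_ _ h2) Ha := ha.
have /cvgrPdist_lt/(_ _ h2) Hb := hb.
apply: filterS2 Ha Hb => t h1 h3.
rewrite cnorm.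
have -> : e = (cRe e)%:C%C by move: eIm; case: (e) => x y /= ->.
rewrite ltcR; apply: le_lt_trans (cabs_le_sum _) _.
have -> : cRe ((a +i* b)%C - u t) = a - cRe (u t) by case: (u t).
have -> : cIm ((a +i* b)%C - u t) = b - cIm (u t) by case: (u t).
move: h1 h3; rewrite /=; lra.
Qed.

Local Open Scope classical_set_scope.

Definition l1e (R : realType) (d : nat) (f : Pidx d -> R[i]) : Prop :=
  exists A q : R, [/\ 0 <= A, 0 <= q, q < 1 & forall p, cabs (f p) <= A * q ^+ psize p].

Definition conv_partial (R : realType) (d : nat) (f g : Pidx d -> R[i]) (P : Pidx d)
  (N : nat) : R[i] := \sum_(p <- cubeseq d N) f p * g (psub P p).

Lemma cvg_seqsum (R : realType) (I : Type) (r : seq I) (F : I -> nat -> R) (l : I -> R) :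
  (forall i, F i @ \oo --> l i) ->
  (fun N => \sum_(i <- r) F i N) @ \oo --> \sum_(i <- r) l i.
Proof.
move=> h; elim: r => [|x r IH].
  have -> : (fun N => \sum_(i <- [::]) F i N) = (fun _ => 0).
    by apply: funext => N; rewrite big_nil.
  by rewrite big_nil; exact: cvg_cst.
have -> : (fun N => \sum_(i <- x :: r) F i N) = (fun N => F x N + \sum_(i <- r) F i N).
  by apply: funext => N; rewrite big_cons.
rewrite big_cons; exact: cvgD.
Qed.

Lemma conv_good (R : realType) (d : nat) (f g : Pidx d -> R[i]) :
  l1e f -> l2 g ->
  (forall P, cvgn (fun N => (conv_partial f g P N : R[i]^o))) /\
  l2 (fun P => limn (fun N => (conv_partial f g P N : R[i]^o))).
Proof.
move=> [A [q [A0 q0 q1 hf]]] hg.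
have [K hK] := cube_exp_bound d (q := q) (ltac:(by rewrite q0 q1)).
have K0 : 0 <= K by apply: le_trans (hK 0%N); rewrite sumr_ge0 // => p _; rewrite exprn_ge0.
have [G [G0 hG]] := l2_bound hg.
have [B hB] := hg.
have B0 : 0 <= B by have := hB [::] isT; rewrite big_nil.
pose v := fun p : Pidx d => A * q ^+ psize p * G.
have hv : forall N, cs v N <= A * K * G.
  move=> N; rewrite /cs /v -mulr_suml -mulr_sumr ler_wpM2r // ler_wpM2l //.
have hF1 : forall N, \sum_(p <- cubeseq d N) cabs (f p) <= A * K.
  move=> N; apply: (@le_trans _ _ (\sum_(p <- cubeseq d N) A * q ^+ psize p)).
    by apply: ler_sum => p _.
  by rewrite -mulr_sumr ler_wpM2l.
have bprod : forall P p, cabs (f p * g (psub P p)) <= v p.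
  move=> P p; rewrite cabsM /v; apply: ler_pM; rewrite ?cabs_ge0 //.
have cRe_cvg : forall P, cvgn (fun N => cRe (conv_partial f g P N)).
  move=> P; have -> : (fun N => cRe (conv_partial f g P N)) =
                    cs (fun p => cRe (f p * g (psub P p))).
    by apply: funext => N; rewrite /conv_partial Re_sum.
  apply: (cs_cvg (v := v)); last by exists (A * K * G).
  by move=> p; apply: le_trans (Re_le _) (bprod P p).
have cIm_cvg : forall P, cvgn (fun N => cIm (conv_partial f g P N)).
  move=> P; have -> : (fun N => cIm (conv_partial f g P N)) =
                    cs (fun p => cIm (f p * g (psub P p))).
    by apply: funext => N; rewrite /conv_partial Im_sum.
  apply: (cs_cvg (v := v)); last by exists (A * K * G).
  by move=> p; apply: le_trans (Im_le _) (bprod P p).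
pose a := fun P => limn (fun N => cRe (conv_partial f g P N)).
pose b := fun P => limn (fun N => cIm (conv_partial f g P N)).
have hcv : forall P, (fun N => (conv_partial f g P N : R[i]^o)) @ \oo --> ((a P +i* b P)%C : R[i]^o).
  by move=> P; apply: cvg_complex; [exact: cRe_cvg | exact: cIm_cvg].
have hlim : forall P, limn (fun N => (conv_partial f g P N : R[i]^o)) = (a P +i* b P)%C.
  by move=> P; apply: cvg_lim; [exact: norm_hausdorff | exact: hcv].
split; first by move=> P; exact: cvgP (hcv P).
exists (A * K * (A * K * B)) => s us.
under eq_bigr do rewrite hlim cabs2 /=.
have hx : (fun N => \sum_(P <- s) (cRe (conv_partial f g P N) ^+ 2 + cIm (conv_partial f g P N) ^+ 2))
     @ \oo --> \sum_(P <- s) (a P ^+ 2 + b P ^+ 2).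
  apply: cvg_seqsum => P; rewrite !expr2.
  apply: cvgD; apply: cvgM; [exact: cRe_cvg|exact: cRe_cvg|exact: cIm_cvg|exact: cIm_cvg].
apply: (cvgr_to_le hx); apply: nearW => N.
under eq_bigr do rewrite -cabs2.
pose u := fun p : Pidx d => cabs (f p).
pose w := fun P p => cabs (g (psub P p)).
have u0 : forall p, 0 <= u p by move=> p; exact: cabs_ge0.
have step1 : forall P, cabs (conv_partial f g P N) ^+ 2 <=
    A * K * \sum_(p <- cubeseq d N) u p * w P p ^+ 2.
  move=> P.
  have h1 : cabs (conv_partial f g P N) <= \sum_(p <- cubeseq d N) u p * w P p.
    apply: le_trans (cabs_sum _ _ _) _; apply: ler_sum => p _; rewrite cabsM.
    by [].
  apply: (@le_trans _ _ ((\sum_(p <- cubeseq d N) u p * w P p) ^+ 2)).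
    by rewrite ler_sqr ?nnegrE ?cabs_ge0 // (le_trans (cabs_ge0 _) h1).
  apply: le_trans (cs_ineq (cubeseq d N) (w P) u0) _; apply: ler_wpM2r; last exact: hF1.
  by rewrite sumr_ge0 // => p _; rewrite mulr_ge0 ?sqr_ge0.
apply: le_trans (ler_sum _ (fun P _ => step1 P)) _.
rewrite -mulr_sumr; apply: ler_wpM2l; first by rewrite mulr_ge0.
rewrite exchange_big /=.
apply: (@le_trans _ _ (\sum_(p <- cubeseq d N) u p * B)).
  apply: ler_sum => p _; rewrite -mulr_sumr ler_wpM2l //.
  rewrite /w -(big_map (fun P => psub P p) xpredT (fun Q => cabs (g Q) ^+ 2)).
  by apply: hB; rewrite map_inj_uniq //; exact: psub_inj.
by rewrite -mulr_suml ler_wpM2r // hF1.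
Qed.

Local Open Scope classical_set_scope.

Definition good (R : realType) (d : nat) (T : Pidx d -> nat -> R[i]) : Prop :=
  (forall P, cvgn (fun N => (T P N : R[i]^o))) /\
  l2 (fun P => limn (fun N => (T P N : R[i]^o))).

Lemma good_sum (R : realType) (d : nat) (I : Type) (r : seq I) (pr : pred I)
  (F : I -> Pidx d -> nat -> R[i]) :
  (forall i, pr i -> good (F i)) ->
  good (fun P N => \sum_(i <- r | pr i) F i P N).
Proof.
move=> h; elim: r => [|x r [IHc IHl]].
  have -> : (fun P N => \sum_(i <- [::] | pr i) F i P N) = (fun _ _ => 0).
    by apply: funext => P; apply: funext => N; rewrite big_nil.
  split; first by move=> P; apply: cvgP; exact: cvg_cst.
  have -> : (fun P : Pidx d => limn (fun _ : nat => (0 : R[i]^o))) = (fun _ => 0).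
    by apply: funext => P; apply: lim_cst; exact: norm_hausdorff.
  exact: l2_0.
have -> : (fun P N => \sum_(i <- x :: r | pr i) F i P N) =
          (fun P N => (if pr x then F x P N else 0) + \sum_(i <- r | pr i) F i P N).
  apply: funext => P; apply: funext => N; rewrite big_cons.
  by case: (pr x) => //; rewrite add0r.
case hx: (pr x); last first.
  under eq_fun do under eq_fun do rewrite add0r.
  by split.
have [hc hl] := h x hx.
split; first by move=> P; exact: is_cvgD (hc P) (IHc P).
have -> : (fun P => limn (fun N => (F x P N + \sum_(i <- r | pr i) F i P N : R[i]^o))) =
   (fun P => limn (fun N => (F x P N : R[i]^o)) + limn (fun N => (\sum_(i <- r | pr i) F i P N : R[i]^o))).
  apply: funext => P; exact: limD (hc P) (IHc P).
exact: l2_add.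
Qed.

Lemma pp_decomp (R : realType) (d n : nat) (f g : ftseries R d n) P Q N :
  prod_partial f g P Q N =
  \sum_(Q1 : {ffun 'I_n -> 'I_(qsize Q).+1} | [forall j, (Q1 j <= Q j)%N])
    conv_partial (fun p => f p [ffun j => nat_of_ord (Q1 j)])
                 (fun p => g p [ffun j => (Q j - Q1 j)%N]) P N.
Proof.
rewrite /prod_partial exchange_big /=; apply: eq_bigr => Q1 _.
by rewrite /conv_partial -cube_sum.
Qed.

Lemma prod_good (R : realType) (d n : nat) (f g : ftseries R d n) Q :
  (forall Q1, l1e (fun p => f p Q1)) -> is_fts g ->
  good (fun P N => prod_partial f g P Q N).
Proof.
move=> hf hg.
have -> : (fun P N => prod_partial f g P Q N) = (fun P N =>
  \sum_(Q1 <- index_enum {ffun 'I_n -> 'I_(qsize Q).+1} | [forall j, (Q1 j <= Q j)%N])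
    conv_partial (fun p => f p [ffun j => nat_of_ord (Q1 j)])
                 (fun p => g p [ffun j => (Q j - Q1 j)%N]) P N).
  by apply: funext => P; apply: funext => N; rewrite pp_decomp.
apply: good_sum => Q1 _; apply: conv_good; first exact: hf.
exact: fts_l2.
Qed.

Lemma prod_ok (R : realType) (d n : nat) (f g : ftseries R d n) :
  (forall Q1, l1e (fun p => f p Q1)) -> is_fts g ->
  prod_defined f g /\ (forall Q, l2 (fun P => mul_series f g P Q)).
Proof.
move=> hf hg; split.
  by move=> P Q; have [hc _] := prod_good Q hf hg; exact: hc.
by move=> Q; have [_ hl] := prod_good Q hf hg; exact: hl.
Qed.

From mathcomp Require Import ring.

Lemma cabs_real (R : realType) (x : R) : cabs (x%:C)%C = `|x|.
Proof. by rewrite /cabs /= expr0n addr0 sqrtr_sqr. Qed.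

Lemma cabs_nat (R : realType) (k : nat) : cabs (k%:R : R[i]) = k%:R.
Proof. by rewrite -(rmorph_nat (@real_complex R)) cabs_real normr_nat. Qed.

Lemma cabs_int (R : realType) (z : int) : cabs (z%:~R : R[i]) = (`|z|%N)%:R.
Proof. by rewrite -(rmorph_int (@real_complex R)) cabs_real natr_absz intr_norm. Qed.

Lemma cabs_i (R : realType) : cabs ('i%C : R[i]) = 1.
Proof. by rewrite /cabs /= expr0n expr1n add0r sqrtr1. Qed.

Lemma analytic_exp (R : realType) (d n : nat) (f : ftseries R d n) :
  analytic f -> exists r : R, 0 < r /\ forall Q, exists A : R, 0 <= A /\
    forall p, cabs (f p Q) <= A * expR (- (r * (psize p)%:R)).
Proof.
move=> [C [r [rho [r0 rho0 h]]]]; exists r; split => // Q.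
exists (`|C| * rho ^- qsize Q); split.
  by rewrite mulr_ge0 // invr_ge0 exprn_ge0 // ltW.
move=> p; apply: le_trans (h p Q) _.
rewrite [X in X <= _]mulrAC; apply: ler_wpM2r; first exact/ltW/expR_gt0.
apply: ler_wpM2r; first by rewrite invr_ge0 exprn_ge0 // ltW.
exact: ler_norm.
Qed.

Lemma expR_nat (R : realType) (r : R) (k : nat) : expR (- (r * k%:R)) = expR (- r) ^+ k.
Proof. by rewrite -mulNr expRM_natr. Qed.

Lemma xexp_bound (R : realType) (r x : R) : 0 < r -> 0 <= x ->
  x * expR (- (r * x)) <= (2 / r) * expR (- (r / 2 * x)).
Proof.
move=> r0 x0.
set y := r / 2 * x; set E := expR (- y).
have E0 : 0 < E by exact: expR_gt0.
have hE : expR (- (r * x)) = E * E.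
  by rewrite /E -expRD; congr expR; rewrite /y; field.
have hx : x = 2 / r * y by rewrite /y; field; rewrite gt_eqF.
have h1 : y <= expR y by apply: le_trans (expR_ge1Dx y); rewrite lerDr.
have h2 : expR y * E = 1 by rewrite /E -expRD subrr expR0.
rewrite hE mulrA; apply: ler_wpM2r; first exact: ltW.
have hyE : y * E <= 1 by rewrite -h2; apply: ler_wpM2r; [exact: ltW | exact: h1].
have hr : 0 <= r^-1 by rewrite invr_ge0 ltW.
rewrite hx; move: hyE hr; set s := r^-1; nra.
Qed.

Lemma q_ok (R : realType) (r : R) : 0 < r -> 0 <= expR (- r) /\ expR (- r) < 1.
Proof.
move=> r0; split; first exact/ltW/expR_gt0.
by rewrite expR_lt1 oppr_lt0.
Qed.

Lemma l1e_dY (R : realType) (d n : nat) (f : ftseries R d n) (k : 'I_n) :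
  analytic f -> forall Q1, l1e (fun p => dY k f p Q1).
Proof.
move=> /analytic_exp [r [r0 h]] Q1.
have [A [A0 hA]] := h [ffun j => (Q1 j + nat_of_bool (j == k))%N].
have [q0 q1] := q_ok r0.
exists ((Q1 k).+1%:R * A), (expR (- r)); split => //; first by rewrite mulr_ge0.
move=> p; rewrite /dY cabsM cabs_nat -mulrA ler_wpM2l // -expR_nat.
exact: hA.
Qed.

Lemma psize_ge (d : nat) (p : Pidx d) (L : 'I_d) : (`|p L| <= psize p)%N.
Proof. by rewrite /psize (bigD1 L) //= leq_addr. Qed.

Lemma l1e_dX (R : realType) (d n : nat) (f : ftseries R d n) (L : 'I_d) :
  analytic f -> forall Q1, l1e (fun p => dX L f p Q1).
Proof.
move=> /analytic_exp [r [r0 h]] Q1.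
have [A [A0 hA]] := h Q1.
have r20 : 0 < r / 2 by rewrite divr_gt0.
have [q0 q1] := q_ok r20.
exists (A * (2 / r)), (expR (- (r / 2))); split => //.
  by rewrite mulr_ge0 // divr_ge0 // ltW.
move=> p; rewrite /dX !cabsM cabs_i mul1r cabs_int.
apply: (@le_trans _ _ ((psize p)%:R * (A * expR (- (r * (psize p)%:R))))).
  apply: ler_pM; rewrite ?ler0n ?cabs_ge0 ?ler_nat ?psize_ge //.
rewrite mulrCA -mulrA ler_wpM2l // -expR_nat.
exact: xexp_bound.
Qed.

From mathcomp Require Import ring.

Definition zoff (R : realType) (d n : nat) (omega : 'I_d -> R) (lam : 'I_n -> R[i])
  (a : R[i]) (f : ftseries R d n) : Prop :=
  forall P Q, small_div omega lam P Q != a -> f P Q = 0.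

Lemma dotw_psub (R : realType) (d : nat) (omega : 'I_d -> R) (P p : Pidx d) :
  dotw omega (psub P p) = dotw omega P - dotw omega p.
Proof.
rewrite /dotw -sumrB; apply: eq_bigr => j _; rewrite ffunE intrB mulrBl //.
Qed.

Lemma dotL_split (R : realType) (n : nat) (lam : 'I_n -> R[i]) (Q Q1 : Qidx n) :
  (forall j, Q1 j <= Q j)%N ->
  dotL lam Q = dotL lam Q1 + dotL lam [ffun j => (Q j - Q1 j)%N].
Proof.
move=> h; rewrite /dotL -big_split; apply: eq_bigr => j _ /=.
by rewrite ffunE -mulrDl -natrD subnKC.
Qed.

Lemma sd_split (R : realType) (d n : nat) (omega : 'I_d -> R) (lam : 'I_n -> R[i])
  (P p : Pidx d) (Q Q1 : Qidx n) :
  (forall j, Q1 j <= Q j)%N ->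
  small_div omega lam P Q =
  small_div omega lam p Q1 + small_div omega lam (psub P p) [ffun j => (Q j - Q1 j)%N].
Proof.
move=> h; rewrite /small_div (dotL_split lam h) dotw_psub rmorphB /=.
ring.
Qed.

Lemma sd_shift (R : realType) (d n : nat) (omega : 'I_d -> R) (lam : 'I_n -> R[i])
  (P : Pidx d) (Q : Qidx n) (k : 'I_n) :
  small_div omega lam P [ffun j => (Q j + nat_of_bool (j == k))%N] =
  small_div omega lam P Q + lam k.
Proof.
rewrite /small_div -addrA; congr (_ + _); rewrite /dotL.
have -> : \sum_(j < n) ([ffun j0 => (Q j0 + nat_of_bool (j0 == k))%N] j)%:R * lam j =
   \sum_(j < n) ((Q j)%:R * lam j + (nat_of_bool (j == k))%:R * lam j).
  by apply: eq_bigr => j _; rewrite ffunE natrD mulrDl.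
rewrite big_split /=; congr (_ + _).
rewrite (bigD1 k) //= eqxx mul1r big1 ?addr0 // => j /negbTE ->.
by rewrite mul0r.
Qed.

Lemma zoff_mul (R : realType) (d n : nat) (omega : 'I_d -> R) (lam : 'I_n -> R[i])
  (a b c : R[i]) (f g : ftseries R d n) :
  a + b = c -> zoff omega lam a f -> zoff omega lam b g ->
  zoff omega lam c (mul_series f g).
Proof.
move=> <- hf hg P Q hne; rewrite /mul_series.
have -> : (fun N => (prod_partial f g P Q N : R[i]^o)) = (fun _ => (0 : R[i]^o)).
  apply: funext => N; rewrite /prod_partial big1 // => cc _.
  rewrite big1 // => Q1 /forallP hQ1.
  set p := cube_pt cc; set Q1' := [ffun j => nat_of_ord (Q1 j)].
  have -> : [ffun j => P j - p j] = psub P p by [].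
  have hle : forall j, (Q1' j <= Q j)%N by move=> j; rewrite ffunE; exact: hQ1.
  case: (eqVneq (small_div omega lam p Q1') a) => ha; last by rewrite hf // mul0r.
  case: (eqVneq (small_div omega lam (psub P p) [ffun j => (Q j - Q1 j)%N]) b) => hb.
    exfalso; move: hne; rewrite (sd_split omega lam P p hle).
    have -> : [ffun j => (Q j - Q1' j)%N] = [ffun j => (Q j - Q1 j)%N].
      by apply/ffunP => j; rewrite !ffunE.
    by rewrite ha hb eqxx.
  by rewrite (hg _ _ hb) mulr0.
exact: (@lim_cst R[i]^o (@norm_hausdorff _ R[i]^o) _ _ _ 0).
Qed.

Lemma zoff_dX (R : realType) (d n : nat) (omega : 'I_d -> R) (lam : 'I_n -> R[i])
  (a : R[i]) (f : ftseries R d n) (L : 'I_d) :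
  zoff omega lam a f -> zoff omega lam a (dX L f).
Proof. by move=> hf P Q h; rewrite /dX (hf P Q h) mulr0. Qed.

Lemma zoff_dY (R : realType) (d n : nat) (omega : 'I_d -> R) (lam : 'I_n -> R[i])
  (a : R[i]) (f : ftseries R d n) (k : 'I_n) :
  zoff omega lam a f -> zoff omega lam (a - lam k) (dY k f).
Proof.
move=> hf P Q h; rewrite /dY hf ?mulr0 //; rewrite sd_shift.
by apply: contra h => /eqP <-; rewrite addrK.
Qed.

Lemma zoff_add (R : realType) (d n : nat) (omega : 'I_d -> R) (lam : 'I_n -> R[i])
  (a : R[i]) (f g : ftseries R d n) :
  zoff omega lam a f -> zoff omega lam a g ->
  zoff omega lam a (fun P Q => f P Q + g P Q).
Proof. by move=> hf hg P Q h; rewrite hf ?hg ?addr0. Qed.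

Lemma zoff_sum (R : realType) (d n : nat) (omega : 'I_d -> R) (lam : 'I_n -> R[i])
  (a : R[i]) (I : Type) (r : seq I) (pr : pred I) (F : I -> ftseries R d n) :
  (forall i, pr i -> zoff omega lam a (F i)) ->
  zoff omega lam a (fun P Q => \sum_(i <- r | pr i) F i P Q).
Proof.
move=> h P Q hne /=; rewrite big1 // => i hi; exact: h.
Qed.

Lemma res_zoff (R : realType) (d n : nat) (omega : 'I_d -> R) (lam : 'I_n -> R[i])
  (f : ftseries R d n) : resonant omega lam f -> zoff omega lam 0 f.
Proof.
move=> h P Q hne; apply/eqP; apply: contraNT hne => hf; apply/eqP; exact: h.
Qed.

Lemma zoff_res (R : realType) (d n : nat) (omega : 'I_d -> R) (lam : 'I_n -> R[i])
  (f : ftseries R d n) : zoff omega lam 0 f -> resonant omega lam f.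
Proof.
move=> h P Q hf; apply/eqP; apply: contraNT hf => hne; apply/eqP; exact: h.
Qed.

Lemma zoff_mulY (R : realType) (d n : nat) (omega : 'I_d -> R) (lam : 'I_n -> R[i])
  (g : ftseries R d n) (m : 'I_n) :
  resonant omega lam g -> zoff omega lam (lam m) (mulY m g).
Proof.
move=> /res_zoff hg P Q hne; rewrite /mulY; case: ifP => // Qm.
apply: hg; apply: contra hne => /eqP h0.
set Q' := [ffun k => (Q k - nat_of_bool (k == m))%N].
have -> : Q = [ffun j => (Q' j + nat_of_bool (j == m))%N].
  apply/ffunP => j; rewrite !ffunE; case: (eqVneq j m) => [->|] /=.
    by rewrite subn1 addn1 prednK.
  by rewrite subn0 addn0.
by rewrite sd_shift h0 add0r.
Qed.

Local Close Scope classical_set_scope.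
Unset Implicit Arguments.

Theorem lemma5p2 (R : realType) (d n : nat) (omega : 'I_d -> R) (lam : 'I_n -> R[i])
  (RX : 'I_d -> ftseries R d n) (RY : 'I_n -> ftseries R d n)
  (phiX : 'I_d -> ftseries R d n) (PhiY : 'I_n -> ftseries R d n) :
  formal_vf RX RY ->
  resonant_vf omega lam RX RY ->
  analytic_map phiX PhiY ->
  tangent_id phiX PhiY ->
  resonant_map omega lam phiX PhiY ->
  DPhiR_defined phiX PhiY RX RY /\
  formal_vf (DPhiR_X phiX RX RY) (DPhiR_Y PhiY RX RY) /\
  resonant_vf omega lam (DPhiR_X phiX RX RY) (DPhiR_Y PhiY RX RY).
Proof.
move=> [fRX fRY] [rRX rRY] [aX aY] _ [rphX rphY].
have rY : forall j, zoff omega lam (lam j) (RY j).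
  move=> j P Q hne; apply/eqP; apply: contraNT hne => h.
  by rewrite -subr_eq0; apply/eqP; exact: rRY.
have zphY : forall m, zoff omega lam (lam m) (PhiY m).
  by move=> m; have [g [_ -> rg]] := rphY m; exact: zoff_mulY.
have okX1 L j := prod_ok (l1e_dX j (aX L)) (fRX j).
have okX2 L k := prod_ok (l1e_dY k (aX L)) (fRY k).
have okY1 m j := prod_ok (l1e_dX j (aY m)) (fRX j).
have okY2 m k := prod_ok (l1e_dY k (aY m)) (fRY k).
split.
  split; first by move=> L j; exact: (okX1 L j).1.
  split; first by move=> L k; exact: (okX2 L k).1.
  split; first by move=> m j; exact: (okY1 m j).1.
  by move=> m k; exact: (okY2 m k).1.
split.
  split.
    move=> L; apply: l2_fts => Q; rewrite /DPhiR_X.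
    apply: l2_add; first apply: l2_add.
    - exact: fts_l2.
    - by apply: l2_sum => j _; exact: (okX1 L j).2.
    - by apply: l2_sum => k _; exact: (okX2 L k).2.
  move=> m; apply: l2_fts => Q; rewrite /DPhiR_Y.
  apply: l2_add.
  - by apply: l2_sum => j _; exact: (okY1 m j).2.
  - by apply: l2_sum => k _; exact: (okY2 m k).2.
split.
  move=> L; apply: zoff_res; rewrite /DPhiR_X.
  apply: zoff_add; first apply: zoff_add.
  - exact: res_zoff (rRX L).
  - apply: zoff_sum => j _; apply: (zoff_mul (a := 0) (b := 0)).
    + by rewrite addr0.
    + exact/zoff_dX/res_zoff/rphX.
    + exact/res_zoff/rRX.
  - apply: zoff_sum => k _; apply: (zoff_mul (a := 0 - lam k) (b := lam k)).
    + by rewrite subrK.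
    + exact/zoff_dY/res_zoff/rphX.
    + exact: rY.
move=> m P Q hne.
have z : zoff omega lam (lam m) (DPhiR_Y PhiY RX RY m).
  rewrite /DPhiR_Y; apply: zoff_add.
  - apply: zoff_sum => j _; apply: (zoff_mul (a := lam m) (b := 0)).
    + by rewrite addr0.
    + exact/zoff_dX/zphY.
    + exact/res_zoff/rRX.
  - apply: zoff_sum => k _; apply: (zoff_mul (a := lam m - lam k) (b := lam k)).
    + by rewrite subrK.
    + exact/zoff_dY/zphY.
    + exact: rY.
apply/eqP; rewrite subr_eq0; apply: contraNT hne => h; apply/eqP; exact: z.
Qed.
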